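(* Let $\mu$ be a finite Borel measure on $\Sigma$ and $\nu=\mu\circ\Pi^{-1}$. (i) Suppose $\mathcal{D}$ is two-dimensional. Then for every $x=\Pi(\omega)\in\Lambda$ with $\lim_{n\to\infty}R_n(\omega)/n=0$, \[\liminf_{r\to0}\frac{\log\nu(B(x,r))}{\log r}\ \ge\ \liminf_{n\to\infty}\frac{\log\mu(B_n(\omega))}{\log\prod_{\nu=1}^n b_{i_\nu}}.\] (ii) For every $x=\Pi(\omega)\in\Lambda$, \[\liminf_{r\to0}\frac{\log\nu(B(x,r))}{\log r}\ \le\ \liminf_{n\to\infty}\frac{\log\mu(B_n(\omega))}{\log\prod_{\nu=1}^n b_{i_\nu}}.\]
   Context: Standing setting (Lalley–Gatzouras system). Let $p\ge 1$ and $m_1,\dots,m_p\ge1$ be integers and $\mathcal{D}=\{(i,j):1\le i\le p,\ 1\le j\le m_i\}$. For $(i,j)\in\mathcal{D}$ let $S_{ij}(x)=\begin{pmatrix}a_{ij}&0\\0&b_i\end{pmatrix}x+\begin{pmatrix}c_{ij}\\ d_i\end{pmatrix}$ on $[0,1]^2$, where $0<a_{ij}\le b_i<1$, $0\le d_1\le\dots\le d_p<1$, $d_{i+1}-d_i\ge b_i$, $b_p+d_p\le 1$, and for each $i$: $0\le c_{i1}\le\dots\le c_{im_i}<1$, $c_{i(j+1)}-c_{ij}\ge a_{ij}$, $a_{im_i}+c_{im_i}\le1$. Let $\Sigma=\mathcal{D}^{\mathbb{N}}$, write $\omega=((i_\nu,j_\nu))_{\nu\ge1}$, $\Pi(\omega)=\lim_n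 S_{\omega_1}\circ\cdots\circ S_{\omega_n}([0,1]^2)$, $\Lambda=\Pi(\Sigma)$. Let $a_{\min}=\min_{(i,j)}a_{ij}$. Define $L_n(\omega)=\min\{l\ge1:\prod_{\nu=1}^l a_{i_\nu j_\nu}\le\prod_{\nu=1}^n b_{i_\nu}\}$ and the approximate symbolic square $B_n(\omega)=\{\omega'\in\Sigma:\omega'_\nu=\omega_\nu\ (1\le\nu\le L_n(\omega)),\ i'_\nu=i_\nu\ (L_n(\omega)<\nu\le n)\}$. $\mathcal{D}$ is called two-dimensional if there exist $(i_1,j_1),(i_2,j_2)\in\mathcal{D}$ with $i_1=i_2$, $j_1\ne j_2$, and there exist $(i_3,j_3),(i_4,j_4)\in\mathcal{D}$ with $i_3\ne i_4$. For $d\in\mathcal{D}$ let $R^d_n(\omega)=\min\{l>n:\omega_l=d\}-n$ and $R_n(\omega)=\max_{d\in\mathcal{D}}R^d_n(\omega)$. $B(x,r)$ is the closed (or open) ball in $\mathbb{R}^2$. *)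

(* Defs.v *)
From HB Require Import structures.
From mathcomp Require Import all_boot all_order all_algebra.
From mathcomp Require Import all_classical all_reals all_analysis.
Set Implicit Arguments. Unset Strict Implicit. Unset Printing Implicit Defensive.
Import Order.TTheory GRing.Theory Num.Theory.
Import numFieldTopology.Exports.
Local Open Scope classical_set_scope.
Local Open Scope ring_scope.

(* Conventions (0-based indices):
   p = P.+1 rows, row i (0 <= i <= P) has m_i = (M i).+1 maps;
   the digit set D = {(i,j) : i <= P, j <= M i}.
   Parameters a c : nat -> nat -> R, b d : nat -> R are only used on D. *)

Section LG0.
Variables (P : nat) (M : nat -> nat).

Definition digit := {i : 'I_P.+1 & 'I_(M i).+1}.

Definition digit0 : digit :=
  @Tagged _ ord0 (fun i : 'I_P.+1 => 'I_(M i).+1) ord0.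

(* symbolic space Sigma = D^N ; omega k is the (k+1)-th symbol omega_{k+1} *)
End LG0.

HB.instance Definition _ (P : nat) (M : nat -> nat) :=
  Finite.on (digit P M).
HB.instance Definition _ (P : nat) (M : nat -> nat) :=
  isPointed.Build (digit P M) (digit0 P M).

Section LG.
Variables (P : nat) (M : nat -> nat).

Definition Sig := nat -> digit P M.


(* cylinder sets: they generate the Borel sigma-algebra of the product
   topology of D^N (D discrete, finite) *)
Definition cylinders : set (set Sig) :=
  [set A | exists (n : nat) (w : Sig), A = [set w' | forall k, (k < n)%N -> w' k = w k]].

Definition SigB := g_sigma_algebraType cylinders.

End LG.

Section LGR.
Variables (R : realType) (P : nat) (M : nat -> nat).
Variables (a c : nat -> nat -> R) (b d : nat -> R).

Definition LG_system : Prop :=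
  (forall i j, (i <= P)%N -> (j <= M i)%N -> 0 < a i j /\ a i j <= b i /\ b i < 1)
  /\ (0 <= d 0%N
      /\ (forall i, (i < P)%N -> d i <= d i.+1 /\ b i <= d i.+1 - d i)
      /\ d P < 1 /\ b P + d P <= 1)
  /\ (forall i, (i <= P)%N ->
        0 <= c i 0%N
        /\ (forall j, (j < M i)%N -> c i j <= c i j.+1 /\ a i j <= c i j.+1 - c i j)
        /\ c i (M i) < 1 /\ a i (M i) + c i (M i) <= 1).

Definition aD (x : digit P M) : R := a (tag x) (tagged x).
Definition bD (x : digit P M) : R := b (tag x).
Definition cD (x : digit P M) : R := c (tag x) (tagged x).
Definition dD (x : digit P M) : R := d (tag x).

Definition Smap (x : digit P M) (z : R * R) : R * R :=
  (aD x * z.1 + cD x, bD x * z.2 + dD x).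

(* compS w n = S_{w_1} o ... o S_{w_n} *)
Fixpoint compS (w : Sig P M) (n : nat) (z : R * R) : R * R :=
  match n with
  | 0%N => z
  | n'.+1 => compS w n' (Smap (w n') z)
  end.

Definition unitsq : set (R * R) := [set z | 0 <= z.1 <= 1 /\ 0 <= z.2 <= 1].

(* Pi(w) = lim_n S_{w_1} o ... o S_{w_n}([0,1]^2), i.e. the (unique) point of
   the intersection of these nested compact rectangles *)
Definition Pi (w : Sig P M) : R * R :=
  xget (0, 0) [set x | forall n, (compS w n @` unitsq) x].

Definition ball2 (x : R * R) (r : R) : set (R * R) :=
  [set y | (y.1 - x.1) ^+ 2 + (y.2 - x.2) ^+ 2 <= r ^+ 2].

Definition prod_a (w : Sig P M) (l : nat) : R := \prod_(k < l) aD (w k).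
Definition prod_b (w : Sig P M) (n : nat) : R := \prod_(k < n) bD (w k).

Definition Ln (w : Sig P M) (n : nat) : nat :=
  xget 0%N [set l | (1 <= l)%N /\ prod_a w l <= prod_b w n /\
                    forall l', (1 <= l')%N -> prod_a w l' <= prod_b w n -> (l <= l')%N].

Definition Bn (w : Sig P M) (n : nat) : set (Sig P M) :=
  [set w' | (forall k, (k < Ln w n)%N -> w' k = w k) /\
            (forall k, (Ln w n <= k)%N -> (k < n)%N -> tag (w' k) = tag (w k))].

(* R^e_n(w) = min { l > n : w_l = e } - n  (+oo if there is no such l);
   in 0-based indexing w_l = w (l-1), so l > n  <->  k := l-1 >= n. *)
Definition Rd (w : Sig P M) (n : nat) (e : digit P M) : \bar R :=
  if pselect (exists k, (n <= k)%N /\ w k = e) then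
    ((xget 0%N [set k | ((n <= k)%N /\ w k = e) /\
                  forall k', (n <= k')%N -> w k' = e -> (k <= k')%N]).+1 - n)%:R%:E
  else +oo%E.

Definition Rn (w : Sig P M) (n : nat) : \bar R :=
  \big[Order.max/-oo%E]_(e : digit P M) Rd w n e.

Definition two_dimensional : Prop :=
  (exists x y : digit P M, tag x = tag y /\ x <> y) /\
  (exists x y : digit P M, tag x <> tag y).

End LGR.

Definition elog {R : realType} (x : \bar R) : \bar R :=
  match x with
  | r%:E => if (0 < r)%R then (ln r)%:E else -oo%E
  | +oo%E => +oo%E
  | -oo%E => -oo%E
  end.

(* Main.v *)
Require Import Defs.
From HB Require Import structures.
From mathcomp Require Import all_boot all_order all_algebra.
From mathcomp Require Import all_classical all_reals all_analysis.
From mathcomp Require Import ring lra.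
Import Order.TTheory GRing.Theory Num.Theory.
Import numFieldTopology.Exports.
Local Open Scope classical_set_scope.
Local Open Scope ring_scope.

Module LGProof.
Set Implicit Arguments. Unset Strict Implicit. Unset Printing Implicit Defensive.



Section Geo.
Variables (R : realType) (P : nat) (M : nat -> nat) (a c : nat -> nat -> R) (b d : nat -> R).
Hypothesis HLG : LG_system P M a c b d.

Lemma c_mono i : (i <= P)%N -> forall j k, (j <= k)%N -> (k <= M i)%N -> c i j <= c i k.
Proof.
move=> iP j k jk kM; elim: k jk kM => [|k IH] jk kM.
  by move: jk; rewrite leqn0 => /eqP ->.
case: HLG => _ [_ /(_ i iP) [_ [Hc _]]].
move: jk; rewrite leq_eqVlt => /orP[/eqP -> //|]; rewrite ltnS => jk.
have [h1 h2] := Hc k kM.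
apply: le_trans (IH jk (ltnW kM)) h1.
Qed.

Lemma c_chain i : (i <= P)%N -> forall j k, (j < k)%N -> (k <= M i)%N -> c i j + a i j <= c i k.
Proof.
move=> iP j k jk kM.
case: HLG => _ [_ /(_ i iP) [_ [Hc _]]].
have jM : (j < M i)%N by apply: leq_trans jk kM.
have [h1 h2] := Hc j jM.
have := c_mono iP jk kM. lra.
Qed.

Lemma d_mono : forall j k, (j <= k)%N -> (k <= P)%N -> d j <= d k.
Proof.
move=> j k jk kM; elim: k jk kM => [|k IH] jk kM.
  by move: jk; rewrite leqn0 => /eqP ->.
case: HLG => _ [[_ [Hd _]] _].
move: jk; rewrite leq_eqVlt => /orP[/eqP -> //|]; rewrite ltnS => jk.
have [h1 h2] := Hd k kM.
apply: le_trans (IH jk (ltnW kM)) h1.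
Qed.

Lemma d_chain : forall j k, (j < k)%N -> (k <= P)%N -> d j + b j <= d k.
Proof.
move=> j k jk kM.
case: HLG => _ [[_ [Hd _]] _].
have jM : (j < P)%N by apply: leq_trans jk kM.
have [h1 h2] := Hd j jM.
have := d_mono jk kM. lra.
Qed.

Local Notation digit := (digit P M).

Lemma tagP (x : digit) : (tag x <= P)%N.
Proof. by rewrite -ltnS ltn_ord. Qed.
Lemma taggedP (x : digit) : (tagged x <= M (tag x))%N.
Proof. by rewrite -ltnS ltn_ord. Qed.

Lemma aD_gt0 (x : digit) : 0 < aD a x.
Proof. by case: HLG => /(_ _ _ (tagP x) (taggedP x)) [] . Qed.
Lemma aD_le_bD (x : digit) : aD a x <= bD b x.
Proof. by case: HLG => /(_ _ _ (tagP x) (taggedP x)) [_ []]. Qed.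
Lemma bD_lt1 (x : digit) : bD b x < 1.
Proof. by case: HLG => /(_ _ _ (tagP x) (taggedP x)) [_ []]. Qed.
Lemma bD_gt0 (x : digit) : 0 < bD b x.
Proof. exact: lt_le_trans (aD_gt0 x) (aD_le_bD x). Qed.
Lemma aD_lt1 (x : digit) : aD a x < 1.
Proof. exact: le_lt_trans (aD_le_bD x) (bD_lt1 x). Qed.

Lemma cD_ge0 (x : digit) : 0 <= cD c x.
Proof.
case: HLG => _ [_ /(_ _ (tagP x)) [h0 _]].
apply: le_trans h0 _; exact: c_mono (tagP x) _ _ (leq0n _) (taggedP x).
Qed.

Lemma ac_le1 i j : (i <= P)%N -> (j <= M i)%N -> a i j + c i j <= 1.
Proof.
move=> iP jM.
have := HLG => -[_ [_ /(_ _ iP) [_ [_ [_ h]]]]].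
move: jM; rewrite leq_eqVlt => /orP[/eqP ->|lt]; first lra.
have := c_chain iP lt (leqnn _).
have [+ _] := HLG.1 i (M i) iP (leqnn _). lra.
Qed.

Lemma acD_le1 (x : digit) : aD a x + cD c x <= 1.
Proof. exact: ac_le1 (tagP x) (taggedP x). Qed.

Lemma dD_ge0 (x : digit) : 0 <= dD d x.
Proof.
case: HLG => _ [[h0 _] _].
apply: le_trans h0 _; exact: d_mono (leq0n _) (tagP x).
Qed.

Lemma bdD_le1 (x : digit) : bD b x + dD d x <= 1.
Proof.
have := HLG => -[_ [[_ [_ [_ h]]] _]].
rewrite /bD /dD.
have := tagP x; rewrite leq_eqVlt => /orP[/eqP ->|lt]; first lra.
have := d_chain lt (leqnn _).
have [_ [_ +]] := HLG.1 P 0 (leqnn _) (leq0n _).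
have [+ [+ _]] := HLG.1 P 0 (leqnn _) (leq0n _). lra.
Qed.

End Geo.

Section Nest.
Variables (R : realType) (t p : nat -> R).
Hypothesis p_ge0 : forall n, 0 <= p n.
Hypothesis t_up : forall n, t n <= t n.+1.
Hypothesis tp_dn : forall n, t n.+1 + p n.+1 <= t n + p n.

Lemma nest_t n m : (n <= m)%N -> t n <= t m.
Proof.
move=> /subnK <-; elim: (m - n)%N => [|k IH]; first by rewrite add0n.
by apply: le_trans IH _; rewrite addSn.
Qed.

Lemma nest_tp n m : (n <= m)%N -> t m + p m <= t n + p n.
Proof.
move=> /subnK <-; elim: (m - n)%N => [|k IH]; first by rewrite add0n.
by apply: le_trans _ IH; rewrite addSn.
Qed.

Lemma nest_sup n : t n <= sup (range t) <= t n + p n.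
Proof.
have tle m : t m <= t m + p m by rewrite lerDl.
have ub : ubound (range t) (t n + p n).
  move=> _ [m _ <-]; case: (leqP n m) => nm.
    exact: le_trans (tle m) (nest_tp nm).
  exact: le_trans (nest_t (ltnW nm)) (tle n).
apply/andP; split.
  by apply: ub_le_sup; [exists (t n + p n) | exists n].
by apply: ge_sup => //; exists (t 0%N), 0%N.
Qed.
End Nest.

Section Geo2.
Variables (R : realType) (P : nat) (M : nat -> nat) (a c : nat -> nat -> R) (b d : nat -> R).
Hypothesis HLG : LG_system P M a c b d.
Local Notation Sig := (Sig P M).

Definition X1 (w : Sig) n := (compS a c b d w n (0,0)).1.
Definition Y (w : Sig) n := (compS a c b d w n (0,0)).2.

Lemma prod_aS (w : Sig) n : prod_a a w n.+1 = prod_a a w n * aD a (w n).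
Proof. by rewrite /prod_a big_ord_recr. Qed.
Lemma prod_bS (w : Sig) n : prod_b b w n.+1 = prod_b b w n * bD b (w n).
Proof. by rewrite /prod_b big_ord_recr. Qed.
Lemma prod_a0 (w : Sig) : prod_a a w 0 = 1.
Proof. by rewrite /prod_a big_ord0. Qed.
Lemma prod_b0 (w : Sig) : prod_b b w 0 = 1.
Proof. by rewrite /prod_b big_ord0. Qed.

Lemma compSE (w : Sig) n z : compS a c b d w n z =
  (X1 w n + prod_a a w n * z.1, Y w n + prod_b b w n * z.2).
Proof.
elim: n z => [|n IH] z.
  by rewrite /X1 /Y prod_a0 prod_b0 /= !add0r !mul1r; case: z.
have -> : X1 w n.+1 = X1 w n + prod_a a w n * cD c (w n).
  by rewrite {1}/X1 /= IH /Smap /= mulr0 add0r.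
have -> : Y w n.+1 = Y w n + prod_b b w n * dD d (w n).
  by rewrite {1}/Y /= IH /Smap /= mulr0 add0r.
rewrite /= IH /Smap /= prod_aS prod_bS; congr (_, _); ring.
Qed.

Lemma X1S (w : Sig) n : X1 w n.+1 = X1 w n + prod_a a w n * cD c (w n).
Proof. by rewrite {1}/X1 /= compSE /Smap /= mulr0 add0r. Qed.
Lemma YS (w : Sig) n : Y w n.+1 = Y w n + prod_b b w n * dD d (w n).
Proof. by rewrite {1}/Y /= compSE /Smap /= mulr0 add0r. Qed.
Lemma X10 (w : Sig) : X1 w 0 = 0. Proof. by []. Qed.
Lemma Y0 (w : Sig) : Y w 0 = 0. Proof. by []. Qed.

Lemma pa_gt0 (w : Sig) n : 0 < prod_a a w n.
Proof. elim: n => [|n IH]; rewrite ?prod_a0 ?prod_aS ?mulr_gt0 ?(aD_gt0 HLG) //. Qed.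
Lemma pb_gt0 (w : Sig) n : 0 < prod_b b w n.
Proof. elim: n => [|n IH]; rewrite ?prod_b0 ?prod_bS ?mulr_gt0 ?(bD_gt0 HLG) //. Qed.
Lemma pa_le_pb (w : Sig) n : prod_a a w n <= prod_b b w n.
Proof.
elim: n => [|n IH]; rewrite ?prod_a0 ?prod_b0 // prod_aS prod_bS.
apply: ler_pM => //; [exact/ltW/pa_gt0|exact/ltW/(aD_gt0 HLG)|exact: (aD_le_bD HLG)].
Qed.
Lemma pb_le1 (w : Sig) n : prod_b b w n <= 1.
Proof.
elim: n => [|n IH]; rewrite ?prod_b0 // prod_bS.
rewrite -[1]mulr1; apply: ler_pM => //; [exact/ltW/pb_gt0|exact/ltW/(bD_gt0 HLG)|exact/ltW/(bD_lt1 HLG)].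
Qed.

Lemma X1_up (w : Sig) n : X1 w n <= X1 w n.+1.
Proof. rewrite X1S lerDl; apply: mulr_ge0; [exact/ltW/pa_gt0|exact: (cD_ge0 HLG)]. Qed.
Lemma X1_dn (w : Sig) n : X1 w n.+1 + prod_a a w n.+1 <= X1 w n + prod_a a w n.
Proof.
rewrite X1S prod_aS -addrA lerD2l -mulrDr ger_pMr ?pa_gt0 // addrC.
exact: (acD_le1 HLG).
Qed.
Lemma Y_up (w : Sig) n : Y w n <= Y w n.+1.
Proof. rewrite YS lerDl; apply: mulr_ge0; [exact/ltW/pb_gt0|exact: (dD_ge0 HLG)]. Qed.
Lemma Y_dn (w : Sig) n : Y w n.+1 + prod_b b w n.+1 <= Y w n + prod_b b w n.
Proof.
rewrite YS prod_bS -addrA lerD2l -mulrDr ger_pMr ?pb_gt0 // addrC.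
exact: (bdD_le1 HLG).
Qed.

Lemma X1_mono (w : Sig) n m : (n <= m)%N -> X1 w n <= X1 w m.
Proof. by move=> h; exact: (nest_t (X1_up w) h). Qed.
Lemma X1p_mono (w : Sig) n m : (n <= m)%N -> X1 w m + prod_a a w m <= X1 w n + prod_a a w n.
Proof. by move=> h; exact: (nest_tp (X1_dn w) h). Qed.
Lemma Y_mono (w : Sig) n m : (n <= m)%N -> Y w n <= Y w m.
Proof. by move=> h; exact: (nest_t (Y_up w) h). Qed.
Lemma Yp_mono (w : Sig) n m : (n <= m)%N -> Y w m + prod_b b w m <= Y w n + prod_b b w n.
Proof. by move=> h; exact: (nest_tp (Y_dn w) h). Qed.

Lemma Pi_in (w : Sig) n :
  (X1 w n <= (Pi a c b d w).1 <= X1 w n + prod_a a w n) /\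
  (Y w n <= (Pi a c b d w).2 <= Y w n + prod_b b w n).
Proof.
pose p1 := sup (range (X1 w)); pose p2 := sup (range (Y w)).
have H1 m := nest_sup (fun k => ltW (pa_gt0 w k)) (X1_up w) (X1_dn w) m.
have H2 m := nest_sup (fun k => ltW (pb_gt0 w k)) (Y_up w) (Y_dn w) m.
have ex : exists x, (forall n, (compS a c b d w n @` @unitsq R) x).
  exists (p1, p2) => m.
  exists ((p1 - X1 w m) / prod_a a w m, (p2 - Y w m) / prod_b b w m).
    have pa0 := pa_gt0 w m; have pb0 := pb_gt0 w m.
    move: (H1 m) (H2 m) => /andP[h1 h1'] /andP[h2 h2'].
    rewrite /unitsq /=; split; apply/andP; split.
    - apply: divr_ge0; last exact: ltW. by rewrite subr_ge0.
    - by rewrite ler_pdivrMr // mul1r lerBlDl.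
    - apply: divr_ge0; last exact: ltW. by rewrite subr_ge0.
    - by rewrite ler_pdivrMr // mul1r lerBlDl.
  rewrite compSE /= [prod_a _ _ _ * _]mulrC [prod_b _ _ _ * _]mulrC !divfK ?gt_eqF ?pa_gt0 ?pb_gt0 //.
  by rewrite !subrKC.
have := xgetPex (0, 0) ex; rewrite -/(Pi a c b d w) => /(_ n) [z [/andP[z10 z11] /andP[z20 z21]]].
rewrite compSE => <- /=; split; apply/andP; split.
- by rewrite lerDl mulr_ge0 // ltW // pa_gt0.
- by rewrite lerD2l ger_pMr ?pa_gt0.
- by rewrite lerDl mulr_ge0 // ltW // pb_gt0.
- by rewrite lerD2l ger_pMr ?pb_gt0.
Qed.

Lemma pre_eq (w w' : Sig) n : (forall k, (k < n)%N -> w' k = w k) ->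
  X1 w' n = X1 w n /\ prod_a a w' n = prod_a a w n.
Proof.
elim: n => [|n IH] h; first by rewrite !prod_a0.
have [e1 e2] : X1 w' n = X1 w n /\ prod_a a w' n = prod_a a w n.
  by apply: IH => k kn; apply: h; rewrite ltnS ltnW.
by rewrite X1S prod_aS X1S prod_aS e1 e2 h.
Qed.

Lemma pre_tag (w w' : Sig) n : (forall k, (k < n)%N -> tag (w' k) = tag (w k)) ->
  Y w' n = Y w n /\ prod_b b w' n = prod_b b w n.
Proof.
elim: n => [|n IH] h; first by rewrite !prod_b0.
have [e1 e2] : Y w' n = Y w n /\ prod_b b w' n = prod_b b w n.
  by apply: IH => k kn; apply: h; rewrite ltnS ltnW.
by rewrite YS prod_bS YS prod_bS e1 e2 /dD /bD h.
Qed.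

Lemma pre_compS (w w' : Sig) n : (forall k, (k < n)%N -> w' k = w k) ->
  compS a c b d w' n = compS a c b d w n.
Proof.
move=> h; apply/funext => z; rewrite !compSE.
have [e1 e2] := pre_eq h.
have [e3 e4] : Y w' n = Y w n /\ prod_b b w' n = prod_b b w n.
  by apply: pre_tag => k /h ->.
by rewrite e1 e2 e3 e4.
Qed.

End Geo2.

Section Meas.
Variables (P : nat) (M : nat -> nat).
Local Notation Sig := (Sig P M).
Local Notation digit := (digit P M).

Lemma cyl_meas (w : Sig) n :
  measurable ([set w' | forall k, (k < n)%N -> w' k = w k] : set (SigB P M)).
Proof. by apply: sub_sigma_algebra; exists n, w. Qed.

Definition ext n (f : {ffun 'I_n -> digit}) : Sig :=
  fun k => match insub k with Some i => f i | None => digit0 P M end.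

Lemma ext_lt n (f : {ffun 'I_n -> digit}) (i : 'I_n) : ext f i = f i.
Proof. by rewrite /ext valK. Qed.

Lemma det_meas n (A : set Sig) :
  (forall w w', (forall k, (k < n)%N -> w' k = w k) -> A w -> A w') ->
  measurable (A : set (SigB P M)).
Proof.
move=> hA.
pose D := [set f : {ffun 'I_n -> digit} | exists w, A w /\ forall i : 'I_n, f i = w i].
have -> : A = \bigcup_(f in D) [set w' : Sig | forall k, (k < n)%N -> w' k = ext f k].
  apply/seteqP; split => [w Aw|w' [f [w [Aw fw]] hw']].
    exists [ffun i : 'I_n => w i].
      by exists w; split => // i; rewrite ffunE.
    by move=> k kn /=; rewrite -[k]/(val (Ordinal kn)) ext_lt ffunE.
  apply: hA Aw => k kn; rewrite hw' // -[k]/(val (Ordinal kn)) ext_lt fw.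
  by [].
apply: fin_bigcup_measurable; first exact: finite_finset.
by move=> f _; exact: cyl_meas.
Qed.

End Meas.

Lemma pow_small (R : realType) (β : R) : 0 <= β < 1 -> forall e, 0 < e ->
  exists N, forall n, (N <= n)%N -> β ^+ n < e.
Proof.
move=> /andP[b0 b1] e e0.
have hb : `|β| < 1 by rewrite ger0_norm.
have := cvgr0_norm_lt (fun n : nat => β ^+ n) (cvg_expr hb) e e0 => -[N _ HN].
exists N => n Nn; have := HN n Nn; rewrite /= ger0_norm //; exact: exprn_ge0.
Qed.

Section Geo3.
Variables (R : realType) (P : nat) (M : nat -> nat) (a c : nat -> nat -> R) (b d : nat -> R).
Hypothesis HLG : LG_system P M a c b d.
Local Notation Sig := (Sig P M).
Local Notation digit := (digit P M).

Definition bmax : R := \big[Order.max/0]_(x : digit) bD b x.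
Definition amin : R := \big[Order.min/1]_(x : digit) aD a x.

Lemma bD_le_bmax (x : digit) : bD b x <= bmax.
Proof. exact: le_bigmax. Qed.
Lemma amin_le_aD (x : digit) : amin <= aD a x.
Proof. exact: bigmin_le. Qed.
Lemma bmax_lt1 : bmax < 1.
Proof.
apply: (big_ind (fun v => v < 1)) => //; first by move=> x y; rewrite gt_max => -> ->.
by move=> x _; exact: (bD_lt1 HLG).
Qed.
Lemma bmax_ge0 : 0 <= bmax.
Proof. apply: (big_ind (fun v => 0 <= v)) => //; first by move=> x y; rewrite le_max => ->.
by move=> x _; exact/ltW/(bD_gt0 HLG). Qed.
Lemma amin_gt0 : 0 < amin.
Proof.
apply: (big_ind (fun v => 0 < v)) => //; first by move=> x y; rewrite lt_min => -> ->.
by move=> x _; exact: (aD_gt0 HLG).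
Qed.
Lemma amin_le_bD (x : digit) : amin <= bD b x.
Proof. exact: le_trans (amin_le_aD x) (aD_le_bD HLG x). Qed.
Lemma amin_lt1 : amin < 1.
Proof. exact: le_lt_trans (amin_le_bD (digit0 P M)) (bD_lt1 HLG _). Qed.

Lemma pb_le_bmax (w : Sig) n : prod_b b w n <= bmax ^+ n.
Proof.
elim: n => [|n IH]; first by rewrite prod_b0.
rewrite prod_bS exprSr; apply: ler_pM => //; [exact/ltW/(pb_gt0 HLG)|exact/ltW/(bD_gt0 HLG)|exact: bD_le_bmax].
Qed.

Lemma pa_ge (w : Sig) n m : (n <= m)%N -> prod_a a w n * amin ^+ (m - n) <= prod_a a w m.
Proof.
move=> /subnK <-; rewrite addnK; elim: (m - n)%N => [|k IH]; first by rewrite expr0 mulr1 add0n.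
rewrite addSn prod_aS exprSr mulrA; apply: ler_pM => //.
- by apply: mulr_ge0; [exact/ltW/(pa_gt0 HLG)|exact/exprn_ge0/ltW/amin_gt0].
- exact/ltW/amin_gt0.
- exact: amin_le_aD.
Qed.

Lemma pb_ge (w : Sig) n m : (n <= m)%N -> prod_b b w n * amin ^+ (m - n) <= prod_b b w m.
Proof.
move=> /subnK <-; rewrite addnK; elim: (m - n)%N => [|k IH]; first by rewrite expr0 mulr1 add0n.
rewrite addSn prod_bS exprSr mulrA; apply: ler_pM => //.
- by apply: mulr_ge0; [exact/ltW/(pb_gt0 HLG)|exact/exprn_ge0/ltW/amin_gt0].
- exact/ltW/amin_gt0.
- exact: amin_le_bD.
Qed.

Lemma pb_small e : 0 < e -> exists N, forall (w : Sig) n, (N <= n)%N -> prod_b b w n < e.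
Proof.
move=> e0; have hb : 0 <= bmax < 1 by rewrite bmax_ge0 bmax_lt1.
have [N HN] := pow_small hb e0.
by exists N => w n Nn; apply: le_lt_trans (pb_le_bmax w n) (HN n Nn).
Qed.

Lemma pa_decr (w : Sig) n : prod_a a w n.+1 <= prod_a a w n.
Proof.
rewrite prod_aS ger_pMr ?(pa_gt0 HLG) //; exact/ltW/(aD_lt1 HLG).
Qed.

Lemma Ln_spec (w : Sig) n : [/\ (1 <= Ln a b w n)%N, prod_a a w (Ln a b w n) <= prod_b b w n &
   forall l', (1 <= l')%N -> prod_a a w l' <= prod_b b w n -> (Ln a b w n <= l')%N].
Proof.
have ex : exists l, [set l | (1 <= l)%N /\ prod_a a w l <= prod_b b w n /\
                    forall l', (1 <= l')%N -> prod_a a w l' <= prod_b b w n -> (l <= l')%N] l.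
  have exP : exists l, (1 <= l)%N && (prod_a a w l <= prod_b b w n).
    exists n.+1; rewrite /=; apply: le_trans (pa_decr w n) (pa_le_pb HLG w n).
  case: (ex_minnP exP) => l /andP[l1 l2] lmin; exists l; split => //; split => //.
  by move=> l' h1 h2; apply: lmin; rewrite h1 h2.
have := xgetPex 0%N ex; rewrite -/(Ln a b w n) => -[h1 [h2 h3]]; by split.
Qed.

Lemma Ln_le (w : Sig) n : (1 <= n)%N -> (Ln a b w n <= n)%N.
Proof.
move=> n1; have [_ _ h] := Ln_spec w n; apply: h => //; exact: (pa_le_pb HLG).
Qed.

Lemma Ln_low (w : Sig) n : amin * prod_b b w n <= prod_a a w (Ln a b w n).
Proof.
have [h1 h2 h3] := Ln_spec w n.
move: h1 h3; case E: (Ln a b w n) => [|l] //= _ h3.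
case: l E h3 => [|l] E h3.
  rewrite prod_aS prod_a0 mul1r; apply: le_trans (amin_le_aD _).
  rewrite ger_pMr ?amin_gt0 //; exact: (pb_le1 HLG).
have hl : prod_b b w n < prod_a a w l.+1.
  rewrite ltNge; apply/negP => hle; have := h3 _ (ltn0Sn l) hle; by rewrite ltnn.
rewrite prod_aS mulrC; apply: ler_pM => //.
- exact/ltW/(pb_gt0 HLG).
- exact/ltW/amin_gt0.
- exact: ltW.
- exact: amin_le_aD.
Qed.

Lemma Bn_meas (w : Sig) n : measurable (Bn a b w n : set (SigB P M)).
Proof.
apply: (@det_meas _ _ (maxn (Ln a b w n) n)) => w1 w2 h [B1 B2]; split.
  by move=> k kL; rewrite h ?B1 // (leq_trans kL) // leq_maxl.
by move=> k Lk kn; rewrite h ?B2 // (leq_trans kn) // leq_maxr.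
Qed.

End Geo3.

Lemma sq_le (R : realType) (u v δ K : R) : 0 <= δ -> -δ <= u - v <= δ -> -K <= v <= K ->
  u ^+ 2 <= v ^+ 2 + δ * (2 * K + δ).
Proof. move=> h0 /andP[h1 h2] /andP[h3 h4]. nra. Qed.
Lemma sq_bd (R : realType) (v K : R) : 0 <= K -> v ^+ 2 <= K ^+ 2 -> -K <= v <= K.
Proof. move=> h0 h1; apply/andP; split; nra. Qed.

Section Ball.
Variables (R : realType) (P : nat) (M : nat -> nat) (a c : nat -> nat -> R) (b d : nat -> R).
Hypothesis HLG : LG_system P M a c b d.
Local Notation Sig := (Sig P M).
Local Notation Pi := (Pi a c b d).

Definition Ubox (x : R * R) (r : R) m : set Sig :=
  [set w' | exists z : R * R, (X1 a c b d w' m <= z.1 <= X1 a c b d w' m + prod_a a w' m) /\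
     (Y a c b d w' m <= z.2 <= Y a c b d w' m + prod_b b w' m) /\ ball2 x r z].

Lemma ball_pre (x : R * R) (r : R) :
  Pi @^-1` (ball2 x r) = \bigcap_m Ubox x r m.
Proof.
apply/seteqP; split => [w hw m _|w hw].
  by exists (Pi w); have [h1 h2] := Pi_in HLG w m.
rewrite /ball2 /=.
pose K := `|r|.
have K0 : 0 <= K := normr_ge0 r.
have rK : r ^+ 2 = K ^+ 2 by rewrite /K real_normK ?num_real.
set g := _ + _.
rewrite leNgt; apply/negP => hg.
set η := g - r ^+ 2.
have η0 : 0 < η by rewrite /η subr_gt0.
set e := Num.min 1 (η / (4 * K + 2)).
have e0 : 0 < e.
  rewrite /e lt_min ltr01 /=; apply: divr_gt0 => //; lra.
have [N HN] := pb_small HLG e0.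
have [z [/andP[z1 z1'] [/andP[z2 z2'] zb]]] := hw N I.
have [/andP[q1 q1'] /andP[q2 q2']] := Pi_in HLG w N.
have δe : prod_b b w N < e := HN w N (leqnn N).
have δ0 : 0 < prod_b b w N := pb_gt0 HLG w N.
have pab := pa_le_pb HLG w N.
move δdef: (prod_b b w N) δe δ0 pab q2' z2' => δ δe δ0 pab q2' z2'.
rewrite /ball2 /= in zb.
have v1K : -K <= z.1 - x.1 <= K.
  apply: sq_bd => //; rewrite -rK; apply: le_trans zb; rewrite lerDl; exact: sqr_ge0.
have v2K : -K <= z.2 - x.2 <= K.
  apply: sq_bd => //; rewrite -rK; apply: le_trans zb; rewrite lerDr; exact: sqr_ge0.
have h1 := @sq_le _ ((Pi w).1 - x.1) (z.1 - x.1) δ K (ltW δ0).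
have h2 := @sq_le _ ((Pi w).2 - x.2) (z.2 - x.2) δ K (ltW δ0).
have {h1}h1 : ((Pi w).1 - x.1) ^+ 2 <= (z.1 - x.1) ^+ 2 + δ * (2 * K + δ).
  apply: h1 v1K; apply/andP; split; lra.
have {h2}h2 : ((Pi w).2 - x.2) ^+ 2 <= (z.2 - x.2) ^+ 2 + δ * (2 * K + δ).
  apply: h2 v2K; apply/andP; split.
  - have := Y_mono HLG w (leqnn N); lra.
  - lra.
have δ1 : δ <= 1 by apply: ltW; apply: lt_le_trans δe _; rewrite /e ge_min lexx.
have δη : δ * (4 * K + 2) < η.
  rewrite -ltr_pdivlMr; last lra.
  by apply: lt_le_trans δe _; rewrite /e ge_min lexx orbT.
have : g <= r ^+ 2 + δ * (4 * K + 2).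
  rewrite /g; nra.
rewrite /η in δη; lra.
Qed.

Lemma ball_meas (x : R * R) (r : R) :
  measurable (Pi @^-1` (ball2 x r) : set (SigB P M)).
Proof.
rewrite ball_pre; apply: bigcapT_measurable => m.
apply: (@det_meas _ _ m) => w1 w2 h [z [hz1 [hz2 hz]]]; exists z.
have [e1 e2] := pre_eq a c b d h.
have [e3 e4] : Y a c b d w2 m = Y a c b d w1 m /\ prod_b b w2 m = prod_b b w1 m.
  by apply: pre_tag => k /h ->.
by rewrite e1 e2 e3 e4.
Qed.

End Ball.

Section ELim.
Variables (R : realType) (T : choiceType) (X : filteredType T).
Local Open Scope ereal_scope.

Lemma einf_gtP (f : X -> \bar R) (F : set_system X) (t : \bar R) :
  t < limf_einf f F -> exists2 V, F V & forall x, V x -> t < f x.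
Proof.
rewrite limf_einfE => /ereal_sup_gt [_ [V FV <-] h].
exists V => // x Vx; apply: lt_le_trans h _.
by apply: ereal_inf_lbound; exists x.
Qed.

Lemma einf_geP (f : X -> \bar R) (F : set_system X) (t : \bar R) V :
  F V -> (forall x, V x -> t <= f x) -> t <= limf_einf f F.
Proof.
move=> FV h; rewrite limf_einfE; apply: (@le_trans _ _ (ereal_inf (f @` V))).
  by apply: le_ereal_inf_tmp => _ [x Vx <-]; exact: h.
by apply: ereal_sup_ubound; exists V.
Qed.
End ELim.

Lemma lee_realP (R : realType) (A B : \bar R) :
  (forall t : R, (t%:E < A)%E -> (t%:E <= B)%E) -> (A <= B)%E.
Proof.
move=> h; rewrite leNgt; apply/negP; move: h.
case: A => [x| |]; case: B => [y| |] h BA //.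
- rewrite lte_fin in BA.
  have H1 : (((x + y) / 2)%:E < x%:E)%E by rewrite lte_fin; lra.
  have := h _ H1; rewrite lee_fin; lra.
- have H1 : ((x - 1)%:E < x%:E)%E by rewrite lte_fin; lra.
  by have := h _ H1; rewrite leeNy_eq.
- have := h (y + 1) (ltry _); rewrite lee_fin; lra.
- by have := h 0 (ltry _); rewrite leeNy_eq.
Qed.

Lemma mulNy_neg (R : realType) (x : R) : x < 0 -> (-oo * x%:E = +oo)%E.
Proof. by move=> x0; rewrite lt0_mulNye // lte_fin. Qed.

Lemma core2 (R : realType) (Lm Lv L2 Lr t e : R) : 0 < L2 -> Lr < 0 -> L2 + Lr < 0 -> Lm <= Lv ->
  t < Lv / (L2 + Lr) -> Lr * e <= - (`|t| * L2) -> 0 < e -> t - e <= Lm / Lr.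
Proof.
move=> h2 hr h2r hmv ht he e0.
rewrite ltr_ndivlMr // in ht.
rewrite ler_ndivlMr //.
have : t * L2 <= `|t| * L2 by rewrite ler_wpM2r ?ler_norm // ltW.
nra.
Qed.

Section Part2.
Variables (R : realType) (P : nat) (M : nat -> nat) (a c : nat -> nat -> R) (b d : nat -> R).
Hypothesis HLG : LG_system P M a c b d.
Variable mu : {finite_measure set (SigB P M) -> \bar R}.
Local Notation Sig := (Sig P M).
Local Notation Pi := (Pi a c b d).

Lemma Bn_sub_ball (w : Sig) n :
  Bn a b w n `<=` Pi @^-1` ball2 (Pi w) (2 * prod_b b w n).
Proof.
move=> w' [B1 B2]; rewrite /ball2 /=.
set L := Ln a b w n.
have [e1 e2] := pre_eq a c b d B1.
have [e3 e4] : Y a c b d w' n = Y a c b d w n /\ prod_b b w' n = prod_b b w n.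
  apply: pre_tag => k kn; case: (ltnP k L) => kL; first by rewrite B1.
  exact: B2.
have [/andP[p1 p1'] _] := Pi_in HLG w L.
have [/andP[q1 q1'] _] := Pi_in HLG w' L.
have [_ /andP[p2 p2']] := Pi_in HLG w n.
have [_ /andP[q2 q2']] := Pi_in HLG w' n.
have [_ hL _] := Ln_spec HLG w n.
rewrite -/L in hL.
rewrite e1 e2 in q1 q1'; rewrite e3 e4 in q2 q2'.
set ρ := prod_b b w n in hL p2' q2' *.
have h1 : -ρ <= (Pi w').1 - (Pi w).1 <= ρ by apply/andP; split; lra.
have h2 : -ρ <= (Pi w').2 - (Pi w).2 <= ρ by apply/andP; split; lra.
move: h1 h2 => /andP[h1 h1'] /andP[h2 h2']. nra.
Qed.

Lemma elog_pos (x : R) : 0 < x -> elog x%:E = (ln x)%:E.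
Proof. by move=> x0; rewrite /elog x0. Qed.
Lemma elog_npos (x : R) : ~~ (0 < x) -> elog x%:E = -oo%E.
Proof. by move=> x0; rewrite /elog (negbTE x0). Qed.

Lemma ln_ltc (x k : R) : 0 < x -> x < expR k -> ln x < k.
Proof. by move=> x0 xc; rewrite -[k in _ < k]expRK ltr_ln ?posrE ?expR_gt0. Qed.

Lemma part2 (w : Sig) :
  (limf_einf (fun r : R => (elog (mu (Pi @^-1` (ball2 (Pi w) r))) * ((ln r)^-1)%:E)%E) ((0:R)^'+)
   <= limn_einf (fun n => (elog (mu (Bn a b w n)) * ((ln (prod_b b w n))^-1)%:E)%E))%E.
Proof.
apply: lee_realP => t /einf_gtP [V [e /= e0 He] HV].
apply/lee_addgt0Pr => ε ε0.
rewrite -leeBlDr // -EFinB.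
have -> : forall u : (\bar R)^nat, limn_einf u = limf_einf u \oo by [].
pose c0 := Num.min (e / 2) (Num.min (1 / 2) (expR (- (`|t| * ln 2) / ε))).
have c00 : 0 < c0 by rewrite /c0 !lt_min expR_gt0 /=; apply/andP; split => //; lra.
have [N HN] := pb_small HLG c00.
apply: (@einf_geP _ _ _ _ _ _ [set n | (N <= n)%N]); first by exists N.
move=> n /= Nn.
have ρc := HN w n Nn.
have ρ0 := pb_gt0 HLG w n.
move: ρc ρ0; set ρ := prod_b b w n => ρc ρ0.
have ρe : ρ < e / 2 by apply: lt_le_trans ρc _; rewrite /c0 ge_min lexx.
have ρh : ρ < 1 / 2 by apply: lt_le_trans ρc _; rewrite /c0 !ge_min lexx orbT.
have ρx : ρ < expR (- (`|t| * ln 2) / ε).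
  by apply: lt_le_trans ρc _; rewrite /c0 !ge_min lexx !orbT.
have rV : V (2 * ρ).
  apply: He; last by rewrite mulr_gt0.
  by rewrite /ball_ /= sub0r normrN gtr0_norm ?mulr_gt0 //; lra.
have Ht := HV _ rV.
have mB := Bn_meas a b w n.
have mball := ball_meas HLG (Pi w) (2 * ρ).
have hle : (mu (Bn a b w n) <= mu (Pi @^-1` ball2 (Pi w) (2 * ρ)))%E :=
  le_measure mu (mem_set mB) (mem_set mball) (@Bn_sub_ball w n).
have fB : mu (Bn a b w n) \is a fin_num := fin_num_measure mu _ mB.
have fball : mu (Pi @^-1` ball2 (Pi w) (2 * ρ)) \is a fin_num := fin_num_measure mu _ mball.
have gB : (0 <= mu (Bn a b w n))%E := measure_ge0 mu (Bn a b w n).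
have gball : (0 <= mu (Pi @^-1` ball2 (Pi w) (2 * ρ)))%E := measure_ge0 mu _.
have lnρ : ln ρ < 0 by apply: ln_lt0; rewrite ρ0 /=; lra.
move: hle fB gB Ht.
case: (mu (Bn a b w n)) => [m| |] //= hle fB' gB Ht.
have [m0|m0] := ltP 0 m; last first.
  by rewrite lt0_mulNye ?leey // lte_fin invr_lt0.
move: hle fball gball Ht.
case: (mu (Pi @^-1` ball2 (Pi w) (2 * ρ))) => [v| |] //= hle fball' gball Ht.
rewrite lee_fin in hle.
have v0 : 0 < v by apply: lt_le_trans hle.
rewrite v0 in Ht; rewrite -EFinM lee_fin.
rewrite -EFinM lte_fin in Ht.
have ln2 : 0 < ln (2 : R) by apply: ln_gt0; lra.
have l2r : ln (2 * ρ) = ln 2 + ln ρ by rewrite lnM ?posrE //; lra.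
rewrite l2r in Ht.
apply: (@core2 _ (ln m) (ln v) (ln 2) (ln ρ) t ε ln2 lnρ) => //.
- by rewrite -l2r; apply: ln_lt0; apply/andP; split; lra.
- by rewrite ler_ln ?posrE.
- have := ln_ltc ρ0 ρx.
  rewrite ltr_pdivlMr // => h; exact: ltW.
Qed.

End Part2.

Lemma digit_eq P M (x y : digit P M) : tag x = tag y -> (tagged x : nat) = tagged y -> x = y.
Proof.
case: x => i j; case: y => i' j' /= ei; subst i' => e.
by have -> : j = j' by apply: val_inj.
Qed.

Lemma sep_realL (R : realType) (Yk p d1 b1 d2 x y δ : R) : y <= Yk + p * d1 + p * b1 ->
  p * (d1 + b1) <= p * d2 -> δ <= x - (Yk + p * d2) -> - δ < y - x -> False.
Proof. move=> *; lra. Qed.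
Lemma sep_realR (R : realType) (Yk p d1 b1 d2 x y δ : R) : Yk + p * d2 <= y ->
  p * (d1 + b1) <= p * d2 -> δ <= Yk + p * d1 + p * b1 - x -> y - x < δ -> False.
Proof. move=> *; lra. Qed.

Section Sep.
Variables (R : realType) (P : nat) (M : nat -> nat) (a c : nat -> nat -> R) (b d : nat -> R).
Hypothesis HLG : LG_system P M a c b d.
Local Notation Sig := (Sig P M).
Local Notation digit := (digit P M).
Local Notation Pi := (Pi a c b d).
Local Notation X1 := (X1 a c b d).
Local Notation Y := (Y a c b d).

Lemma row_sep (w w' : Sig) k δ :
  Y w' k = Y w k -> prod_b b w' k = prod_b b w k ->
  δ <= (Pi w).2 - Y w k.+1 -> δ <= Y w k.+1 + prod_b b w k.+1 - (Pi w).2 ->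
  `|(Pi w').2 - (Pi w).2| < δ -> tag (w' k) = tag (w k).
Proof.
move=> e1 e2 h1 h2 hd.
have [_ /andP[y1 y2]] := Pi_in HLG w' k.+1.
rewrite YS prod_bS e1 e2 in y1 y2.
rewrite YS prod_bS in h1 h2.
have pb0 := pb_gt0 HLG w k.
move: hd; rewrite ltr_norml => /andP[hd1 hd2].
rewrite /dD /bD in y1 y2 h1 h2.
have tP := tagP (w k); have tP' := tagP (w' k).
case: (ltngtP (tag (w' k)) (tag (w k))) => [lt|gt|eq]; last exact: val_inj.
- have := d_chain HLG lt tP.
  move=> h; have : prod_b b w k * (d (tag (w' k)) + b (tag (w' k))) <= prod_b b w k * d (tag (w k)).
    by rewrite ler_pM2l.
  move=> h'; exfalso; exact: (sep_realL y2 h' h1 hd1).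
- have := d_chain HLG gt tP'.
  move=> h; have : prod_b b w k * (d (tag (w k)) + b (tag (w k))) <= prod_b b w k * d (tag (w' k)).
    by rewrite ler_pM2l.
  move=> h'; exfalso; exact: (sep_realR y1 h' h2 hd2).
Qed.

Lemma digit_chain (x y : digit) : tag x = tag y -> (tagged x < tagged y)%N ->
  cD c x + aD a x <= cD c y.
Proof.
case: x => i j; case: y => i' j' /= ei; subst i' => lt.
have iP : (i <= P)%N by rewrite -ltnS ltn_ord.
have jM : (j' <= M i)%N by rewrite -ltnS ltn_ord.
rewrite /cD /aD /=; exact: (c_chain HLG iP lt jM).
Qed.

Lemma col_sep (w w' : Sig) k δ : tag (w' k) = tag (w k) ->
  X1 w' k = X1 w k -> prod_a a w' k = prod_a a w k ->
  δ <= (Pi w).1 - X1 w k.+1 -> δ <= X1 w k.+1 + prod_a a w k.+1 - (Pi w).1 ->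
  `|(Pi w').1 - (Pi w).1| < δ -> w' k = w k.
Proof.
move=> et e1 e2 h1 h2 hd.
have [/andP[y1 y2] _] := Pi_in HLG w' k.+1.
rewrite X1S prod_aS e1 e2 in y1 y2.
rewrite X1S prod_aS in h1 h2.
have pa0 := pa_gt0 HLG w k.
move: hd; rewrite ltr_norml => /andP[hd1 hd2].
case: (ltngtP (tagged (w' k)) (tagged (w k))) => [lt|gt|eq]; last exact: digit_eq.
- have := digit_chain et lt.
  move=> h; have : prod_a a w k * (cD c (w' k) + aD a (w' k)) <= prod_a a w k * cD c (w k).
    by rewrite ler_pM2l.
  move=> h'; exfalso; exact: (sep_realL y2 h' h1 hd1).
- have := digit_chain (esym et) gt.
  move=> h; have : prod_a a w k * (cD c (w k) + aD a (w k)) <= prod_a a w k * cD c (w' k).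
    by rewrite ler_pM2l.
  move=> h'; exfalso; exact: (sep_realR y1 h' h2 hd2).
Qed.

Lemma sep (w : Sig) n δ : (1 <= n)%N ->
  (forall l, (l <= Ln a b w n)%N -> δ <= (Pi w).1 - X1 w l /\ δ <= X1 w l + prod_a a w l - (Pi w).1) ->
  (forall l, (l <= n)%N -> δ <= (Pi w).2 - Y w l /\ δ <= Y w l + prod_b b w l - (Pi w).2) ->
  forall w', `|(Pi w').1 - (Pi w).1| < δ -> `|(Pi w').2 - (Pi w).2| < δ -> Bn a b w n w'.
Proof.
move=> n1 Hh Hv w' d1 d2.
set L := Ln a b w n.
have Ln' : (L <= n)%N := Ln_le HLG w n1.
suff H : forall k, (k <= n)%N ->
    (forall j, (j < k)%N -> (j < L)%N -> w' j = w j) /\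
    (forall j, (j < k)%N -> tag (w' j) = tag (w j)).
  have [H1 H2] := H n (leqnn n); split.
    by move=> k kL; apply: H1 => //; apply: leq_trans kL Ln'.
  by move=> k _ kn; apply: H2.
elim => [|k IH] kn; first by split.
have [IH1 IH2] := IH (ltnW kn).
have [e1 e2] := pre_tag a c b d IH2.
have tk : tag (w' k) = tag (w k).
  have [h1 h2] := Hv k.+1 kn.
  exact: row_sep e1 e2 h1 h2 d2.
split => j; rewrite ltnS leq_eqVlt => /orP[/eqP ->|jk].
- move=> kL.
  have [f1 f2] := pre_eq a c b d (fun j jk => IH1 j jk (ltn_trans jk kL)).
  have [h1 h2] := Hh k.+1 kL.
  exact: col_sep tk f1 f2 h1 h2 d1.
- exact: IH1.
- exact: tk.
- exact: IH2.
Qed.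

End Sep.

Section Part1a.
Variables (R : realType) (P : nat) (M : nat -> nat) (a c : nat -> nat -> R) (b d : nat -> R).
Hypothesis HLG : LG_system P M a c b d.
Local Notation Sig := (Sig P M).
Local Notation digit := (digit P M).
Local Notation Pi := (Pi a c b d).
Local Notation X1 := (X1 a c b d).
Local Notation Y := (Y a c b d).

Lemma cD_lt1 (x : digit) : cD c x < 1.
Proof. have := acD_le1 HLG x; have := aD_gt0 HLG x; lra. Qed.
Lemma dD_lt1 (x : digit) : dD d x < 1.
Proof. have := bdD_le1 HLG x; have := bD_gt0 HLG x; lra. Qed.

Lemma exists_LR : two_dimensional P M ->
  (exists eL : digit, 0 < cD c eL) /\ (exists eR : digit, aD a eR + cD c eR < 1) /\
  (exists eB : digit, 0 < dD d eB) /\ (exists eT : digit, bD b eT + dD d eT < 1).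
Proof.
move=> [[x [y [txy nxy]]] [u [v nuv]]].
have hxy : (tagged x : nat) <> tagged y by move=> /(digit_eq txy).
have hcol : exists x' y' : digit, tag x' = tag y' /\ (tagged x' < tagged y')%N.
  case: (ltngtP (tagged x) (tagged y)) => [lt|gt|//].
    by exists x, y.
  by exists y, x.
have hrow : exists u' v' : digit, (tag u' < tag v')%N.
  case: (ltngtP (tag u) (tag v)) => [lt|gt|eq].
  - by exists u, v.
  - by exists v, u.
  - by exfalso; apply: nuv; apply: val_inj.
have [x' [y' [t' lt']]] := hcol; have [u' [v' lt2]] := hrow.
have hc := digit_chain HLG t' lt'.
have hd := d_chain HLG lt2 (tagP v').
have ax := aD_gt0 HLG x'; have cx := cD_ge0 HLG x'.
have cy := cD_lt1 y'.
have bu := bD_gt0 HLG u'; have du := dD_ge0 HLG u'.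
have dv := dD_lt1 v'.
rewrite /dD /bD in bu du dv.
split; first by exists y'; lra.
split; first by exists x'; lra.
split; first by exists v'; rewrite /dD; lra.
by exists u'; rewrite /dD /bD; lra.
Qed.

Lemma distL (w : Sig) l k : (l <= k)%N -> prod_a a w k * cD c (w k) <= (Pi w).1 - X1 w l.
Proof.
move=> lk; have [/andP[h _] _] := Pi_in HLG w k.+1.
rewrite X1S in h; have := X1_mono HLG w lk; lra.
Qed.
Lemma distR (w : Sig) l k : (l <= k)%N ->
  prod_a a w k * (1 - (aD a (w k) + cD c (w k))) <= X1 w l + prod_a a w l - (Pi w).1.
Proof.
move=> lk; have [/andP[_ h] _] := Pi_in HLG w k.+1.
rewrite X1S prod_aS in h; have := X1p_mono HLG w lk; lra.
Qed.
Lemma distB (w : Sig) l k : (l <= k)%N -> prod_b b w k * dD d (w k) <= (Pi w).2 - Y w l.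
Proof.
move=> lk; have [_ /andP[h _]] := Pi_in HLG w k.+1.
rewrite YS in h; have := Y_mono HLG w lk; lra.
Qed.
Lemma distT (w : Sig) l k : (l <= k)%N ->
  prod_b b w k * (1 - (bD b (w k) + dD d (w k))) <= Y w l + prod_b b w l - (Pi w).2.
Proof.
move=> lk; have [_ /andP[_ h]] := Pi_in HLG w k.+1.
rewrite YS prod_bS in h; have := Yp_mono HLG w lk; lra.
Qed.

End Part1a.

Section Window.
Variables (R : realType) (P : nat) (M : nat -> nat).
Local Notation Sig := (Sig P M).
Local Notation digit := (digit P M).

Lemma window (w : Sig) :
  (fun n : nat => (Rn R w n * ((n%:R : R)^-1)%:E)%E) @ \oo --> ((0 : R)%:E) ->
  forall q, (0 < q)%N -> exists N, forall n, (N <= n)%N -> forall e : digit,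
    exists k, [/\ (n <= k)%N, w k = e & ((k.+1 - n) * q <= n)%N].
Proof.
move=> /fine_cvgP [[N2 _ H2] hfine] q q0.
have qi : 0 < (q%:R : R)^-1 by rewrite invr_gt0 ltr0n.
have [N1 _ H1] := cvgr0_norm_lt _ hfine _ qi.
exists (maxn 1 (maxn N1 N2)) => n Nn e.
move: Nn; rewrite !geq_max => /andP[n1 /andP[nN1 nN2]].
have hf := H2 n nN2; have hl := H1 n nN1.
have ni : 0 < (n%:R : R)^-1 by rewrite invr_gt0 ltr0n.
have hlt : (Rn R w n * ((n%:R : R)^-1)%:E < ((q%:R : R)^-1)%:E)%E.
  rewrite -(fineK hf) lte_fin; apply: le_lt_trans (ler_norm _) hl.
have hle : (Rd R w n e * ((n%:R : R)^-1)%:E <= Rn R w n * ((n%:R : R)^-1)%:E)%E.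
  apply: lee_wpmul2r; first by rewrite lee_fin ltW.
  exact: le_bigmax.
have := le_lt_trans hle hlt.
rewrite /Rd; case: pselect => [ex|nex]; last by rewrite gt0_mulye ?lte_fin.
have exmin : exists k, [set k | ((n <= k)%N /\ w k = e) /\
                  forall k', (n <= k')%N -> w k' = e -> (k <= k')%N] k.
  have exP : exists k, (n <= k)%N && (w k == e).
    by have [k [h1 h2]] := ex; exists k; rewrite h1 h2 eqxx.
  case: (ex_minnP exP) => k /andP[h1 /eqP h2] hmin; exists k; split => //.
  by move=> k' h1' h2'; apply: hmin; rewrite h1' h2' eqxx.
have := xgetPex 0%N exmin.
set k0 := xget 0%N _ => -[[h1 h2] _] hk.
exists k0; split => //.
rewrite -EFinM lte_fin in hk.
have qn : (0 : R) < q%:R * n%:R by rewrite mulr_gt0 ?ltr0n // (leq_trans _ n1).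
have idn : (k0.+1 - n)%:R * q%:R - n%:R =
    ((k0.+1 - n)%:R * (n%:R : R)^-1 - (q%:R)^-1) * (q%:R * n%:R).
  have n0 : (n%:R : R) != 0 by rewrite pnatr_eq0 -lt0n (leq_trans _ n1).
  have q0' : (q%:R : R) != 0 by rewrite pnatr_eq0 -lt0n.
  rewrite mulrBl mulKf // [q%:R * _]mulrC mulrA mulfVK //.
have : (k0.+1 - n)%:R * q%:R - n%:R < (0 : R).
  by rewrite idn pmulr_llt0 // subr_lt0.
rewrite subr_lt0 -natrM ltr_nat => h; exact: ltnW.
Qed.

End Window.

Lemma bnd_help (R : realType) (C κ am ρ p pl : R) (m : nat) :
  0 < C -> C <= κ -> 0 < am -> am <= 1 -> 0 < ρ ->
  pl * am ^+ m <= p -> am * ρ <= pl -> C * am ^+ m.+1 * ρ <= p * κ.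
Proof.
move=> C0 Cκ a0 a1 ρ0 hp hpl.
have X0 : 0 <= am ^+ m by rewrite exprn_ge0 // ltW.
have -> : C * am ^+ m.+1 * ρ = C * (am ^+ m * (am * ρ)) by rewrite exprS; ring.
have h1 : am ^+ m * (am * ρ) <= p.
  apply: le_trans hp; rewrite mulrC; exact: ler_wpM2r.
have p0 : 0 <= p by apply: le_trans h1; rewrite !mulr_ge0 // ltW.
apply: le_trans (ler_wpM2l (ltW C0) h1) _.
by rewrite mulrC ler_wpM2l.
Qed.

Section Interior.
Variables (R : realType) (P : nat) (M : nat -> nat) (a c : nat -> nat -> R) (b d : nat -> R).
Hypothesis HLG : LG_system P M a c b d.
Local Notation Sig := (Sig P M).
Local Notation digit := (digit P M).
Local Notation Pi := (Pi a c b d).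
Local Notation X1 := (X1 a c b d).
Local Notation Y := (Y a c b d).
Local Notation amin := (amin P M a).

Variables (eL eR eB eT : digit).
Hypotheses (hL : 0 < cD c eL) (hR : aD a eR + cD c eR < 1)
  (hB : 0 < dD d eB) (hT : bD b eT + dD d eT < 1).

Definition Cst : R := Num.min (Num.min (cD c eL) (1 - (aD a eR + cD c eR)))
   (Num.min (dD d eB) (1 - (bD b eT + dD d eT))).

Lemma Cst_gt0 : 0 < Cst.
Proof. rewrite /Cst !lt_min hL hB /= !subr_gt0 hR hT //. Qed.
Lemma Cst_lt1 : Cst < 1.
Proof.
apply: le_lt_trans (cD_lt1 HLG eL); rewrite /Cst !ge_min lexx //.
Qed.

Definition srad (w : Sig) q n : R := Cst * amin ^+ (n %/ q).+1 * prod_b b w n.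

Lemma srad_gt0 (w : Sig) q n : 0 < srad w q n.
Proof.
by rewrite /srad !mulr_gt0 ?Cst_gt0 ?exprn_gt0 ?(amin_gt0 HLG) ?(pb_gt0 HLG).
Qed.

Lemma interior_sub (w : Sig) q NW n : (0 < q)%N ->
  (forall n, (NW <= n)%N -> forall e : digit,
    exists k, [/\ (n <= k)%N, w k = e & ((k.+1 - n) * q <= n)%N]) ->
  (1 <= n)%N -> (NW <= n)%N -> (NW <= Ln a b w n)%N ->
  forall r, 0 < r -> r < srad w q n ->
  Pi @^-1` (ball2 (Pi w) r) `<=` Bn a b w n.
Proof.
move=> q0 HW n1 Wn WL r r0 rs w' hw'.
set L := Ln a b w n.
have Ln' : (L <= n)%N := Ln_le HLG w n1.
have a0 := amin_gt0 HLG; have a1 := ltW (amin_lt1 HLG).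
have ρ0 := pb_gt0 HLG w n.
have C0 := Cst_gt0.
have kb : forall s k, (s <= n)%N -> (s <= k)%N -> ((k.+1 - s) * q <= s)%N -> (k - s <= n %/ q)%N.
  move=> s k sn sk h; rewrite leq_divRL //; apply: leq_trans _ (leq_trans h sn).
  by rewrite leq_mul2r subSn // leqnSn orbT.
have expb : forall m, (m <= n %/ q)%N -> amin ^+ (n %/ q) <= amin ^+ m.
  by move=> m hm; apply: ler_wiXn2l => //; exact: ltW.
have Hh : forall l, (l <= L)%N -> srad w q n <= (Pi w).1 - X1 w l /\
                                 srad w q n <= X1 w l + prod_a a w l - (Pi w).1.
  move=> l lL.
  have [k1 [h1 e1 w1]] := HW L WL eL.
  have [k2 [h2 e2 w2]] := HW L WL eR.
  split.
  - apply: le_trans (distL HLG w (leq_trans lL h1)); rewrite e1.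
    apply: (bnd_help C0 _ a0 a1 ρ0 _ (Ln_low HLG w n)); first by rewrite /Cst !ge_min lexx.
    apply: le_trans (pa_ge HLG w h1); apply: ler_wpM2l; first exact/ltW/(pa_gt0 HLG).
    exact/expb/kb.
  - apply: le_trans (distR HLG w (leq_trans lL h2)); rewrite e2.
    apply: (bnd_help C0 _ a0 a1 ρ0 _ (Ln_low HLG w n)); first by rewrite /Cst !ge_min lexx orbT.
    apply: le_trans (pa_ge HLG w h2); apply: ler_wpM2l; first exact/ltW/(pa_gt0 HLG).
    exact/expb/kb.
have Hv : forall l, (l <= n)%N -> srad w q n <= (Pi w).2 - Y w l /\
                                 srad w q n <= Y w l + prod_b b w l - (Pi w).2.
  move=> l ln.
  have [k1 [h1 e1 w1]] := HW n Wn eB.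
  have [k2 [h2 e2 w2]] := HW n Wn eT.
  have hρ : amin * prod_b b w n <= prod_b b w n by rewrite ler_piMl // ltW.
  split.
  - apply: le_trans (distB HLG w (leq_trans ln h1)); rewrite e1.
    apply: (bnd_help C0 _ a0 a1 ρ0 _ hρ); first by rewrite /Cst !ge_min lexx !orbT.
    apply: le_trans (pb_ge HLG w h1); apply: ler_wpM2l; first exact/ltW/(pb_gt0 HLG).
    exact/expb/kb.
  - apply: le_trans (distT HLG w (leq_trans ln h2)); rewrite e2.
    apply: (bnd_help C0 _ a0 a1 ρ0 _ hρ); first by rewrite /Cst !ge_min lexx !orbT.
    apply: le_trans (pb_ge HLG w h2); apply: ler_wpM2l; first exact/ltW/(pb_gt0 HLG).
    exact/expb/kb.
move: hw'; rewrite /ball2 /= => hb.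
have r2 : forall u v : R, u ^+ 2 + v ^+ 2 <= r ^+ 2 -> `|u| < srad w q n.
  move=> u v h; have hu : u ^+ 2 <= r ^+ 2 by apply: le_trans h; rewrite lerDl sqr_ge0.
  have /andP[h1 h2] := sq_bd (ltW r0) hu.
  by apply: le_lt_trans rs; rewrite ler_norml h1 h2.
apply: (sep HLG n1 Hh Hv).
- exact: (r2 _ _ hb).
- by apply: (r2 _ ((Pi w').1 - (Pi w).1)); rewrite addrC.
Qed.

End Interior.

Lemma core1 (R : realType) (t ε Lv Lm Lρ Lr Cc A Bc Q nn : R) :
  0 < ε -> Lv <= Lm -> Lρ < 0 -> Lr < 0 -> Lr <= Lρ -> Lm < t * Lρ ->
  0 <= Cc -> 0 < A -> 0 < Bc -> 0 < Q -> 1 <= nn ->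
  - Lr * Q <= (Cc + 2 * A - Lρ) * Q + (nn + 1) * A ->
  nn * Bc <= - Lρ -> 2 * t * (Cc + 2 * A) <= ε * (- Lρ) -> 4 * t * A <= ε * Bc * Q ->
  t - ε <= Lv / Lr.
Proof.
move=> e0 hvm hρ hr hrρ hm C0 A0 B0 Q0 n1 hD hΛ h2 h4.
rewrite ler_ndivlMr //.
suff : t * Lρ <= (t - ε) * Lr by lra.
have [t0|t0] := leP t 0.
  have : t * (Lρ - Lr) <= ε * (- Lr) by nra.
  nra.
have [te|te] := leP (t - ε) 0.
  nra.
have h1 : (t - ε) * (- Lr * Q) <= (t - ε) * ((Cc + 2 * A - Lρ) * Q + (nn + 1) * A).
  by rewrite ler_wpM2l // ltW // subr_gt0.
have h2' : (t - ε) * (Cc + 2 * A) <= ε * (- Lρ) / 2.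
  have : (t - ε) * (Cc + 2 * A) <= t * (Cc + 2 * A) by rewrite ler_wpM2r //; lra.
  lra.
have h3 : (t - ε) * (nn + 1) * A <= nn * (ε * Bc * Q) / 2.
  have : (t - ε) * (nn + 1) * A <= t * (2 * nn) * A.
    rewrite ler_wpM2r //; first lra. nra.
  nra.
have h5 : nn * (ε * Bc * Q) <= (- Lρ) * ε * Q.
  have : nn * Bc * (ε * Q) <= (- Lρ) * (ε * Q) by rewrite ler_wpM2r // mulr_ge0 // ltW.
  lra.
have : (t - ε) * (- Lr * Q) <= t * (- Lρ) * Q by nra.
move=> h; have : (t - ε) * (- Lr) <= t * (- Lρ).
  rewrite -(ler_pM2r Q0); lra.
lra.
Qed.

Section Part1.
Variables (R : realType) (P : nat) (M : nat -> nat) (a c : nat -> nat -> R) (b d : nat -> R).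
Hypothesis HLG : LG_system P M a c b d.
Variable mu : {finite_measure set (SigB P M) -> \bar R}.
Local Notation Sig := (Sig P M).
Local Notation digit := (digit P M).
Local Notation Pi := (Pi a c b d).
Local Notation amin := (amin P M a).
Local Notation bmax := (bmax P M b).

Lemma ln_srad (eL eR eB eT : digit) (w : Sig) q n r :
  (0 < q)%N -> 0 < r -> srad a c b d eL eR eB eT w q n.+1 <= r ->
  0 < Cst a c b d eL eR eB eT ->
  - ln r * q%:R <= (- ln (Cst a c b d eL eR eB eT) + 2 * (- ln amin) - ln (prod_b b w n)) * q%:R
                   + (n%:R + 1) * (- ln amin).
Proof.
move=> q0 r0 hs C0.
set C := Cst a c b d eL eR eB eT.
set k := (n.+1 %/ q)%N.
have a0 := amin_gt0 HLG.
have ρ0 := pb_gt0 HLG w n.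
have b0 := bD_gt0 HLG (w n).
have hlr : ln (srad a c b d eL eR eB eT w q n.+1) <= ln r.
  by rewrite ler_ln ?posrE //; rewrite /srad !mulr_gt0 ?exprn_gt0 ?(pb_gt0 HLG).
have e1 : ln (srad a c b d eL eR eB eT w q n.+1) =
          ln C + k.+1%:R * ln amin + ln (prod_b b w n) + ln (bD b (w n)).
  rewrite /srad -/C -/k prod_bS.
  rewrite lnM ?posrE ?mulr_gt0 ?exprn_gt0 // lnM ?posrE ?exprn_gt0 //.
  rewrite lnM ?posrE // lnXn // mulr_natl; ring.
have hb : ln amin <= ln (bD b (w n)) by rewrite ler_ln ?posrE //; exact: (amin_le_bD HLG).
have hk : (k%:R * q%:R <= n%:R + 1 :> R).
  by rewrite -natrM natr1 ler_nat /k leq_trunc_div.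
have lA : ln amin < 0 by apply: ln_lt0; rewrite a0 (amin_lt1 HLG).
rewrite e1 in hlr.
have qR : (0 : R) < q%:R by rewrite ltr0n.
have : - ln r <= - ln C + (k%:R + 2) * (- ln amin) - ln (prod_b b w n).
  rewrite -natr1 in hlr; lra.
move=> h; have := ler_wpM2r (ltW qR) h.
have : k%:R * q%:R * (- ln amin) <= (n%:R + 1) * (- ln amin) by rewrite ler_wpM2r // oppr_ge0 ltW.
move=> h1 h2; nra.
Qed.

Lemma srad_le (eL eR eB eT : digit) (w : Sig) q n :
  Cst a c b d eL eR eB eT < 1 -> 0 < Cst a c b d eL eR eB eT ->
  srad a c b d eL eR eB eT w q n <= prod_b b w n.
Proof.
move=> C1 C0; rewrite /srad ger_pMl ?(pb_gt0 HLG) //.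
have a0 := amin_gt0 HLG; have a1 := amin_lt1 HLG.
rewrite -[1]mulr1; apply: ler_pM => //; [exact: ltW|exact/exprn_ge0/ltW|exact: ltW|].
by apply: exprn_ile1; exact: ltW.
Qed.

Lemma part1 (w : Sig) : two_dimensional P M ->
  (fun n : nat => (Rn R w n * ((n%:R : R)^-1)%:E)%E) @ \oo --> ((0 : R)%:E) ->
  (limn_einf (fun n => (elog (mu (Bn a b w n)) * ((ln (prod_b b w n))^-1)%:E)%E)
   <= limf_einf (fun r : R => (elog (mu (Pi @^-1` (ball2 (Pi w) r))) * ((ln r)^-1)%:E)%E) ((0:R)^'+))%E.
Proof.
move=> h2d hRn.
have [[eL hL] [[eR hR] [[eB hB] [eT hT]]]] := exists_LR HLG h2d.
have C0 : 0 < Cst a c b d eL eR eB eT := Cst_gt0 hL hR hB hT.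
have C1 : Cst a c b d eL eR eB eT < 1 := Cst_lt1 HLG eL eR eB eT.
apply: lee_realP => t.
have -> : forall u : (\bar R)^nat, limn_einf u = limf_einf u \oo by [].
move=> /einf_gtP [V [N1 _ HN1] HV].
apply/lee_addgt0Pr => ε ε0; rewrite -leeBlDr // -EFinB.
have a0 := amin_gt0 HLG; have a1 := amin_lt1 HLG.
have A0 : 0 < - ln amin by rewrite oppr_gt0 ln_lt0 // a0 a1.
have bm0 : 0 < bmax := lt_le_trans (bD_gt0 HLG (digit0 P M)) (bD_le_bmax _ _).
have bm1 : bmax < 1 := bmax_lt1 HLG.
have Bc0 : 0 < - ln bmax by rewrite oppr_gt0 ln_lt0 // bm0 bm1.
have Cc0 : 0 <= - ln (Cst a c b d eL eR eB eT) by rewrite oppr_ge0 ln_le0 // ltW.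
pose q := (Num.trunc (4 * t * (- ln amin) / (ε * (- ln bmax)))).+1.
have q0 : (0 < q)%N by [].
have hq : 4 * t * (- ln amin) <= ε * (- ln bmax) * q%:R.
  have := truncnS_gt (4 * t * (- ln amin) / (ε * (- ln bmax))).
  rewrite ltr_pdivrMr ?mulr_gt0 // => h; apply: ltW; rewrite [_ * q%:R]mulrC; exact: h.
have [NW HW] := window hRn q0.
have [NL HNL] := pb_small HLG (exprn_gt0 NW a0).
have [NΛ HNΛ] := pb_small HLG
  (expR_gt0 (- (2 * t * (- ln (Cst a c b d eL eR eB eT) + 2 * (- ln amin))) / ε)).
pose N := maxn 1 (maxn N1 (maxn NW (maxn NL NΛ))).
apply: (@einf_geP _ _ _ _ _ _ [set r | 0 < r < srad a c b d eL eR eB eT w q N]).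
  exists (srad a c b d eL eR eB eT w q N) => /=; first exact: (srad_gt0 HLG).
  move=> r /= hr r0; rewrite r0 /=.
  by move: hr; rewrite /ball_ /= sub0r normrN gtr0_norm.
move=> r /andP[r0 rs].
pose S := fun n => (N <= n)%N && (r < srad a c b d eL eR eB eT w q n).
have exS : exists n, S n by exists N; rewrite /S leqnn rs.
have [Nr HNr] := pb_small HLG r0.
have ubS : forall n, S n -> (n <= Nr)%N.
  move=> n /andP[_ h]; rewrite leqNgt; apply/negP => lt.
  have := HNr w n (ltnW lt); have := srad_le w q n C1 C0; lra.
case: (ex_maxnP exS ubS) => n /andP[Nn rsn] nmax.
have sn1 : srad a c b d eL eR eB eT w q n.+1 <= r.
  rewrite leNgt; apply/negP => h.
  have : S n.+1 by rewrite /S h (leq_trans Nn).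
  by move/nmax; rewrite ltnn.
move: Nn; rewrite /N !geq_max => /andP[n1 /andP[nN1 /andP[nNW /andP[nNL nNΛ]]]].
have WL : (NW <= Ln a b w n)%N.
  rewrite leqNgt; apply/negP => lt.
  have h1 := HNL w n nNL.
  have h2 := pa_ge HLG w (leq0n (Ln a b w n)).
  rewrite prod_a0 mul1r subn0 in h2.
  have [_ h3 _] := Ln_spec HLG w n.
  have h4 : amin ^+ NW <= amin ^+ (Ln a b w n).
    by apply: ler_wiXn2l; [exact: ltW|exact: ltW|exact: ltnW].
  lra.
have sub := interior_sub HLG hL hR hB hT q0 HW n1 nNW WL r0 rsn.
have mB := Bn_meas a b w n.
have mball := ball_meas HLG (Pi w) r.
have hle : (mu (Pi @^-1` ball2 (Pi w) r) <= mu (Bn a b w n))%E :=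
  le_measure mu (mem_set mball) (mem_set mB) sub.
have fB : mu (Bn a b w n) \is a fin_num := fin_num_measure mu _ mB.
have fball : mu (Pi @^-1` ball2 (Pi w) r) \is a fin_num := fin_num_measure mu _ mball.
have gB : (0 <= mu (Bn a b w n))%E := measure_ge0 mu (Bn a b w n).
have gball : (0 <= mu (Pi @^-1` ball2 (Pi w) r))%E := measure_ge0 mu _.
have Ht := HV n (HN1 n nN1).
have ρ0 := pb_gt0 HLG w n.
have ρ1 : prod_b b w n < 1.
  apply: le_lt_trans (pb_le_bmax HLG w n) _.
  by rewrite expr_lt1 // ?ltW // -lt0n.
have rρ : r < prod_b b w n := lt_le_trans rsn (srad_le w q n C1 C0).
have lnρ : ln (prod_b b w n) < 0 by apply: ln_lt0; rewrite ρ0.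
have lnr : ln r < 0 by apply: ln_lt0; rewrite r0 /=; apply: lt_trans rρ ρ1.
have lrρ : ln r <= ln (prod_b b w n) by rewrite ler_ln ?posrE // ltW.
move: hle fball gball.
case: (mu (Pi @^-1` ball2 (Pi w) r)) => [v| |] //= hle _ gball.
have [v0|v0] := ltP 0 v; last first.
  by rewrite lt0_mulNye ?leey // lte_fin invr_lt0.
move: hle fB gB Ht.
case: (mu (Bn a b w n)) => [m| |] //= hle _ gB.
rewrite lee_fin in hle.
have m0 : 0 < m by apply: lt_le_trans hle.
rewrite m0 -EFinM lte_fin ltr_ndivlMr // => Ht.
rewrite -EFinM lee_fin.
apply: (core1 (Lm := ln m) (Lρ := ln (prod_b b w n)) (Cc := - ln (Cst a c b d eL eR eB eT))
   (A := - ln amin) (Bc := - ln bmax) (Q := q%:R) (nn := n%:R)) => //.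
- by rewrite ler_ln ?posrE.
- by rewrite ler1n.
- exact: (ln_srad q0 r0 sn1 C0).
- have : ln (prod_b b w n) <= ln (bmax ^+ n).
    by rewrite ler_ln ?posrE ?exprn_gt0 //; exact: (pb_le_bmax HLG).
  rewrite lnXn // -mulr_natl; lra.
- have := ln_ltc ρ0 (HNΛ w n nNΛ).
  rewrite ltr_pdivlMr // => h.
  rewrite mulrC; lra.
Qed.

End Part1.

End LGProof.
Import LGProof.

Theorem lemma2p1 (R : realType) (P : nat) (M : nat -> nat)
    (a c : nat -> nat -> R) (b d : nat -> R)
    (HLG : LG_system P M a c b d)
    (mu : {finite_measure set (SigB P M) -> \bar R}) :
  let nu := fun A : set (R * R) => mu (Pi a c b d @^-1` A) in
  let lhs := fun w : Sig P M =>
    limf_einf (fun r : R => (elog (nu (ball2 (Pi a c b d w) r)) * ((ln r)^-1)%:E)%E)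
      ((0 : R)^'+) in
  let rhs := fun w : Sig P M =>
    limn_einf (fun n : nat =>
      (elog (mu (Bn a b w n)) * ((ln (prod_b b w n))^-1)%:E)%E) in
  (two_dimensional P M ->
     forall w : Sig P M,
       (fun n : nat => (Rn R w n * ((n%:R : R)^-1)%:E)%E) @ \oo --> ((0 : R)%:E) ->
       (rhs w <= lhs w)%E)
  /\ (forall w : Sig P M, (lhs w <= rhs w)%E).
Proof.
move=> nu lhs rhs; split.
  by move=> h2d w hR; exact: (part1 HLG mu h2d hR).
by move=> w; exact: (part2 HLG mu w).
Qed.
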